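(* For every instance $I=(h_1\ge\dots\ge h_n>0)$ of discrete BGT there exists an eventually periodic schedule $S^*$ (a finite prefix followed by infinitely many repetitions of a fixed finite block) with $\mathrm{MH}(S^* )=\mathrm{OPT}(I)$. Moreover, for every schedule $S$ there is an eventually periodic schedule $S'$ with $\mathrm{MH}(S')\le\mathrm{MH}(S)$.
   Context: Discrete BGT: $n$ bamboos with growth rates $h_1\ge\dots\ge h_n>0$, initial heights $0$; a schedule is an infinite sequence $(i_1,i_2,\dots)$ over $\{1,\dots,n\}$, and at the end of day $j$ bamboo $b_{i_j}$ is cut to $0$ (one cut per day, no other cuts). Height of $b_i$ at time $t$ is $h_i$ times the time since its last cut (or since time $0$). $\mathrm{MH}(S)$ = supremum of all heights over all times; $\mathrm{OPT}(I)=\inf_S\mathrm{MH}(S)$. It is known that $\mathrm{OPT}(I)\le 2\sum_i h_i<\infty$. *)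

(* Defs.v *)
From mathcomp Require Import all_boot all_order all_algebra.
From mathcomp Require Import all_classical all_reals ereal.
Set Implicit Arguments. Unset Strict Implicit. Unset Printing Implicit Defensive.
Import Order.TTheory GRing.Theory Num.Theory.
Local Open Scope ring_scope.

(* A schedule for n bamboos: s d is the bamboo cut at the END of day d+1,
   i.e. at time d+1 (days are numbered 1,2,...; s is 0-indexed). *)
Definition schedule (n : nat) := nat -> 'I_n.

(* Time of the last cut of bamboo i at or before integer time m
   (0 if it has not been cut by then). *)
Definition lastcut n (s : schedule n) (i : 'I_n) (m : nat) : nat :=
  (\max_(k < m.+1 | (0 < k)%N && (s k.-1 == i)) (k : nat))%N.

(* Height of bamboo i at real time t >= 0: h_i times the time elapsed since
   its last cut (a cut performed at integer time k is already in effect at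
   time k). *)
Definition height (R : realType) n (h : 'I_n -> R) (s : schedule n)
    (i : 'I_n) (t : R) : R :=
  h i * (t - (lastcut s i (Num.truncn t))%:R).

Definition MH (R : realType) n (h : 'I_n -> R) (s : schedule n) : \bar R :=
  ereal_sup [set ((height h s i t)%:E)%E | i in [set: 'I_n] & t in [set t : R | 0 <= t]].

Definition OPT (R : realType) n (h : 'I_n -> R) : \bar R :=
  ereal_inf [set MH h s | s in [set: schedule n]].

Definition eventually_periodic n (s : schedule n) : Prop :=
  exists p0 per : nat, (0 < per)%N /\ forall t : nat, (p0 <= t)%N -> s (t + per)%N = s t.

(* Main.v *)
Require Import Defs.
From mathcomp Require Import all_boot all_order all_algebra.
From mathcomp Require Import all_classical all_reals ereal.
From mathcomp Require Import ring lra zify.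
Import Order.TTheory GRing.Theory Num.Theory.
Set Implicit Arguments. Unset Strict Implicit. Unset Printing Implicit Defensive.
Local Open Scope ring_scope.
Module MPart1.

Fixpoint age n (s : schedule n) (i : 'I_n) (m : nat) : nat :=
  match m with 0 => 0%N | m'.+1 => if s m' == i then 0%N else (age s i m').+1 end.

Lemma lastcut_le n (s : schedule n) i m : (lastcut s i m <= m)%N.
Proof.
rewrite /lastcut; apply/bigmax_leqP => k _; rewrite -ltnS; exact: ltn_ord.
Qed.

Lemma lastcut_age n (s : schedule n) i m : (lastcut s i m + age s i m)%N = m.
Proof.
elim: m => [|m IH].
  by have := lastcut_le s i 0; rewrite leqn0 addn0 => /eqP.
have -> : lastcut s i m.+1 = maxn (lastcut s i m) (if s m == i then m.+1 else 0%N).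
  rewrite /lastcut big_mkcond big_ord_recr /= -big_mkcond /=.
  by case: (s m == i).
rewrite /=; case: (s m == i).
  by rewrite addn0; apply/maxn_idPr; apply: leqW; apply: lastcut_le.
by rewrite maxn0 addnS IH.
Qed.
End MPart1.
Import MPart1.
Module MPart2.

Definition Eset (R : realType) n (h : 'I_n -> R) (s : schedule n) : set (\bar R) :=
  [set ((h i * (age s i m).+1%:R)%:E)%E | i in [set: 'I_n] & m in [set: nat]].

Lemma height_age (R : realType) n (h : 'I_n -> R) s i (t : R) :
  height h s i t = h i * (t - (Num.truncn t)%:R + (age s i (Num.truncn t))%:R).
Proof.
rewrite /height; congr (_ * _).
have := lastcut_age s i (Num.truncn t) => E.
rewrite -{2}E natrD; ring.
Qed.

Lemma le_fin_eps (R : realType) (x : R) (y : \bar R) :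
  (forall e : R, 0 < e -> ((x - e)%:E <= y)%E) -> (x%:E <= y)%E.
Proof.
case: y => [r| |] H.
- rewrite lee_fin; apply/ler_addgt0Pr => e e0.
  by have := H e e0; rewrite lee_fin lerBlDr.
- by rewrite leey.
- by have := H 1 ltr01.
Qed.

Lemma MH_D (R : realType) n (h : 'I_n -> R) (hpos : forall i, 0 < h i) s :
  MH h s = ereal_sup (Eset h s).
Proof.
apply/eqP; rewrite eq_le; apply/andP; split.
  apply: ge_ereal_sup => _ [i _ [t /= t0 <-]].
  apply: le_ereal_sup_tmp; eexists; first by exists i => //; exists (Num.truncn t).
  rewrite lee_fin height_age ler_pM2l // [_.+1%:R]mulrS.
  have := truncnS_gt t; rewrite mulrS => ht.
  lra.
apply: ge_ereal_sup => _ [i _ [m _ <-]].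
apply: le_fin_eps => e e0.
have hi := hpos i.
set d := e / (h i + e).
have d0 : 0 < d by rewrite divr_gt0 // addr_gt0.
have d1 : d < 1 by rewrite ltr_pdivrMr ?addr_gt0 // mul1r ltrDr.
set t := m%:R + 1 - d.
have tm : Num.truncn t = m.
  apply: truncn_def; rewrite /t mulrS; apply/andP; split.
    lra.
  lra.
apply: le_ereal_sup_tmp; eexists.
  exists i => //; exists t => //=.
  rewrite /t; have : (0:R) <= m%:R by []. lra.
rewrite lee_fin height_age tm /t.
have hd : h i * d <= e.
  rewrite /d mulrA ler_pdivrMr ?addr_gt0 // mulrDr mulrC lerDl ltW //.
  by rewrite mulr_gt0.
rewrite mulrS; apply: le_trans (_ : h i * (1 + (age s i m)%:R) - h i * d <= _).
  by rewrite lerD2l lerN2.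
rewrite -mulrBr ler_pM2l //.
lra.
Qed.
End MPart2.
Import MPart2.
Module MPart3.

Definition per_sched n (s : schedule n) a b : schedule n :=
  fun k => if (k < b)%N then s k else s (a + (k - b) %% (b - a))%N.
Definition phi a b m := if (m < b)%N then m else (a + (m - b) %% (b - a))%N.

Lemma age_per n (s : schedule n) a b : (a < b)%N ->
  (forall i, age s i a = age s i b) ->
  forall i m, age (per_sched s a b) i m = age s i (phi a b m).
Proof.
move=> ab Hab i; elim=> [|m IH].
  by rewrite /phi (leq_ltn_trans (leq0n a) ab).
rewrite /= IH /per_sched /phi.
case: (ltnP m.+1 b) => h1.
  by rewrite (ltn_trans (ltnSn m) h1).
case: (ltnP m b) => h2.
  have eb : m.+1 = b by apply/eqP; rewrite eqn_leq h1 h2.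
  rewrite -eb subnn mod0n addn0 Hab -eb.
  by [].
set p := (b - a)%N.
have p0 : (0 < p)%N by rewrite subn_gt0.
have hr := ltn_pmod (m - b) p0.
set r := ((m - b) %% p)%N in hr *.
have hq := divn_eq (m - b) p.
have e1 : (m.+1 - b = (m - b) %/ p * p + r.+1)%N.
  rewrite -/r in hq. lia.
rewrite e1 modnMDl.
case: (ltnP r.+1 p) => h3.
  by rewrite modn_small // addnS.
have rp : r.+1 = p by apply/eqP; rewrite eqn_leq hr h3.
rewrite rp modnn addn0 Hab.
have eb : (a + r).+1 = b by rewrite -addnS rp /p subnKC //; exact: ltnW.
by rewrite -eb.
Qed.

Lemma per_sched_ep n (s : schedule n) a b : (a < b)%N -> eventually_periodic (per_sched s a b).
Proof.
move=> ab; exists b, (b - a)%N; split; first by rewrite subn_gt0.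
move=> t bt; rewrite /per_sched ltnNge (leq_trans bt (leq_addr _ _)) ltnNge bt /=.
by rewrite -addnBAC // modnDr.
Qed.
End MPart3.
Import MPart3.
Module MPart4.

Lemma nat_bound (R : realType) n (h : 'I_n -> R) (hpos : forall i, 0 < h i) (B : R) :
  exists K, forall i k, h i * k%:R <= B -> (k <= K)%N.
Proof.
exists (\max_(i < n) Num.truncn (B / h i))%N => i k hk.
apply: (leq_trans _ (@leq_bigmax _ (fun i => Num.truncn (B / h i)) i)).
have hk' : k%:R <= B / h i by rewrite ler_pdivlMr // mulrC.
rewrite truncn_ge_nat //; exact: le_trans hk'.
Qed.

Lemma pigeon n (s : schedule n) K : (forall i m, (age s i m < K.+1)%N) ->
  exists a b, (a < b)%N /\ forall i, age s i a = age s i b.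
Proof.
move=> Hb.
pose T := {ffun 'I_n -> 'I_K.+1}.
pose f := fun j : 'I_(#|T|.+1) => ([ffun i => inord (age s i j)] : T).
have : ~~ injectiveb f.
  apply/negP => /injectiveP /leq_card; rewrite card_ord ltnn //.
move=> /injectivePn [x [y xy fxy]].
have E : forall i, age s i x = age s i y.
  move=> i; have := congr1 (fun g : T => (g i : nat)) fxy.
  by rewrite /f /= !ffunE !inordK.
case: (ltngtP x y) => hxy.
- by exists x, y.
- by exists y, x; split => // i; rewrite E.
- by move: xy; rewrite (val_inj hxy) eqxx.
Qed.
End MPart4.
Import MPart4.
Module MPart5.
Local Open Scope classical_set_scope.

Lemma seq_min (R : realType) (l : seq (\bar R)) (S : set (\bar R)) :
  S !=set0 -> (forall x, S x -> x \in l) -> exists2 x, S x & forall y, S y -> (x <= y)%E.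
Proof.
elim: l S => [|a l IH] S [y0 Sy0] Hl; first by have := Hl _ Sy0.
case: (pselect (exists y, S y /\ y != a)) => [[y1 [Sy1 ya]]|N].
  have [x' [Sx' x'a] Hx'] : exists2 x, (S x /\ x != a) &
      forall y, (S y /\ y != a) -> (x <= y)%E.
    apply: IH; first by exists y1.
    move=> x [Sx xa]; have := Hl _ Sx; rewrite in_cons (negbTE xa) //.
  case: (pselect (S a /\ (a < x')%E)) => [[Sa ax]|N2].
    exists a => // y Sy; case: (eqVneq y a) => [->//|ya'].
    exact: le_trans (ltW ax) (Hx' y (conj Sy ya')).
  exists x' => // y Sy; case: (eqVneq y a) => [ya'|ya']; last exact: Hx'.
  subst y; rewrite leNgt; apply/negP => ax; exact: N2.
have Sa : S a.
  case: (eqVneq y0 a) => [<-//|ya]; by exfalso; apply: N; exists y0.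
exists a => // y Sy; case: (eqVneq y a) => [->//|ya].
by exfalso; apply: N; exists y.
Qed.

Lemma seq_max (R : realType) (l : seq (\bar R)) (S : set (\bar R)) :
  S !=set0 -> (forall x, S x -> x \in l) -> exists2 x, S x & forall y, S y -> (y <= x)%E.
Proof.
elim: l S => [|a l IH] S [y0 Sy0] Hl; first by have := Hl _ Sy0.
case: (pselect (exists y, S y /\ y != a)) => [[y1 [Sy1 ya]]|N].
  have [x' [Sx' x'a] Hx'] : exists2 x, (S x /\ x != a) &
      forall y, (S y /\ y != a) -> (y <= x)%E.
    apply: IH; first by exists y1.
    move=> x [Sx xa]; have := Hl _ Sx; rewrite in_cons (negbTE xa) //.
  case: (pselect (S a /\ (x' < a)%E)) => [[Sa ax]|N2].
    exists a => // y Sy; case: (eqVneq y a) => [->//|ya'].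
    exact: le_trans (Hx' y (conj Sy ya')) (ltW ax).
  exists x' => // y Sy; case: (eqVneq y a) => [ya'|ya']; last exact: Hx'.
  subst y; rewrite leNgt; apply/negP => ax; exact: N2.
have Sa : S a.
  case: (eqVneq y0 a) => [<-//|ya]; by exfalso; apply: N; exists y0.
exists a => // y Sy; case: (eqVneq y a) => [->//|ya].
by exfalso; apply: N; exists y.
Qed.
End MPart5.
Import MPart5.
Module MPart6.
Local Open Scope classical_set_scope.

Section S.
Variables (R : realType) (n : nat) (h : 'I_n -> R) (hn : (0 < n)%N)
  (hpos : forall i : 'I_n, 0 < h i).

Definition vlist K := [seq ((h i * k%:R)%:E)%E | i <- enum 'I_n, k <- iota 0 K.+1].

Lemma elem_le_MH s i m : ((h i * (age s i m).+1%:R)%:E <= MH h s)%E.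
Proof. rewrite MH_D //; apply: ereal_sup_ubound; by exists i => //; exists m. Qed.

Lemma MH_notNy s : MH h s <> -oo%E.
Proof. move=> E; have := elem_le_MH s (Ordinal hn) 0; by rewrite E. Qed.

Lemma age_bounded s r : MH h s = r%:E ->
  exists K, forall i m, ((age s i m).+1 <= K)%N.
Proof.
move=> E; have [K HK] := nat_bound hpos r; exists K => i m; apply: (HK i).
by have := elem_le_MH s i m; rewrite E lee_fin.
Qed.

Lemma in_vlist K i k : (k <= K)%N -> ((h i * k%:R)%:E)%E \in vlist K.
Proof.
move=> kK; apply: (allpairs_f (fun i k => ((h i * k%:R)%:E)%E)); first exact: mem_enum.
by rewrite mem_iota add0n ltnS.
Qed.

Lemma MH_attained s r : MH h s = r%:E ->
  exists i m, MH h s = ((h i * (age s i m).+1%:R)%:E)%E.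
Proof.
move=> E; have [K HK] := age_bounded E.
have [x Ex Hx] : exists2 x, Eset h s x & forall y, Eset h s y -> (y <= x)%E.
  apply: (@seq_max _ (vlist K)).
    by exists ((h (Ordinal hn) * (age s (Ordinal hn) 0).+1%:R)%:E)%E; exists (Ordinal hn) => //; exists 0%N.
  by move=> _ [i _ [m _ <-]]; apply: in_vlist.
have -> : MH h s = x.
  rewrite MH_D //; apply/eqP; rewrite eq_le; apply/andP; split.
    exact: ge_ereal_sup.
  exact: ereal_sup_ubound.
by case: Ex => i _ [m _ <-]; exists i, m.
Qed.

Lemma part2 s : exists s', eventually_periodic s' /\ (MH h s' <= MH h s)%E.
Proof.
case E: (MH h s) => [r| |].
- have [K HK] := age_bounded E.
  have [a [b [ab Hab]]] := @pigeon _ s K (fun i m => ltnW (HK i m)).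
  exists (per_sched s a b); split; first exact: per_sched_ep.
  rewrite -E !MH_D //; apply: ereal_sup_le => _ [i _ [m _ <-]].
  by rewrite (age_per ab Hab); exists i => //; exists (phi a b m).
- exists (fun _ => Ordinal hn); split; last by rewrite leey.
  by exists 0%N, 1%N.
- by exfalso; apply: (MH_notNy E).
Qed.

Lemma part1 : exists sstar, eventually_periodic sstar /\ MH h sstar = OPT h.
Proof.
case: (pselect (exists s0, MH h s0 <> +oo%E)) => [[s0 H0]|N].
  move: H0; case E0: (MH h s0) => [B| |] H0; [| by exfalso; exact: H0 | by exfalso; apply: (MH_notNy E0)].
  have [K HK] := nat_bound hpos B.
  have [x [s1 [E1 xB]] Hx] : exists2 x, (exists s1, MH h s1 = x /\ (x <= B%:E)%E) &
      forall y, (exists s1, MH h s1 = y /\ (y <= B%:E)%E) -> (x <= y)%E.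
    apply: (@seq_min _ (vlist K)); first by exists (B%:E); exists s0.
    move=> _ [s [<- sB]].
    move: sB; case Es: (MH h s) => [r| |] sB; [| by [] | by exfalso; apply: (MH_notNy Es)].
    have [i [m Ei]] := MH_attained Es.
    rewrite -Es Ei; apply: in_vlist; apply: (HK i).
    by move: sB; rewrite -Es Ei lee_fin.
  have opt : MH h s1 = OPT h.
    apply/eqP; rewrite eq_le; apply/andP; split; last first.
      by apply: ereal_inf_lbound; exists s1.
    apply: le_ereal_inf_tmp => _ [s _ <-].
    case: (leP (MH h s) B%:E) => sB.
      by rewrite E1; apply: Hx; exists s.
    by rewrite E1; apply: le_trans xB (ltW sB).
  have [s' [ep le]] := part2 s1.
  exists s'; split => //; apply/eqP; rewrite eq_le; apply/andP; split.
    by rewrite -opt.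
  by apply: ereal_inf_lbound; exists s'.
have allinf : forall s, MH h s = +oo%E.
  by move=> s; apply: contrapT => Hs; apply: N; exists s.
exists (fun _ => Ordinal hn); split; first by exists 0%N, 1%N.
rewrite allinf; apply/eqP; rewrite eq_le leey /=.
rewrite andbT /OPT; by apply: le_ereal_inf_tmp => _ [s _ <-]; rewrite allinf.
Qed.
End S.
End MPart6.
Import MPart6.

Theorem mainTheorem6 (R : realType) (n : nat) (h : 'I_n -> R)
  (hn : (0 < n)%N)
  (hmono : forall i j : 'I_n, (i <= j)%N -> h j <= h i)
  (hpos : forall i : 'I_n, 0 < h i) :
  (exists sstar : schedule n, eventually_periodic sstar /\ MH h sstar = OPT h) /\
  (forall s : schedule n, exists s' : schedule n,
      eventually_periodic s' /\ (MH h s' <= MH h s)%E).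
Proof.
split; [exact: part1 | exact: part2].
Qed.
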